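(* Let $h\in\mathbb{R}$ with $h\neq 0$, and let $\{\mathcal{H}_t\colon t\in\mathbb{R}\}$ be the one-parameter group of helicoidal motions of $\mathbb{R}^3$ given by $\mathcal{H}_t(x,y,z)=(x\cos t-y\sin t,\ x\sin t+y\cos t,\ z+ht)$. Let $\vec{v}\in\mathbb{R}^3$ be a unit vector and $\alpha\in\mathbb{R}$ with $\alpha\neq 0$. Let $\Sigma$ be an orientable surface immersed in the half-space $\{p\in\mathbb{R}^3\colon\langle p,\vec{v}\rangle>0\}$ which is invariant by the helicoidal group, i.e. $\mathcal{H}_t(\Sigma)=\Sigma$ for all $t\in\mathbb{R}$. If $\Sigma$ is an $\alpha$-singular minimal surface with respect to $\vec{v}$, i.e. its mean curvature satisfies $H(p)=\alpha\frac{\langle N(p),\vec{v}\rangle}{\langle p,\vec{v}\rangle}$ for all $p\in\Sigma$, then the twist axis (the $z$-axis) is contained in the vector plane $\{p\in\mathbb{R}^3\colon\langle p,\vec{v}\rangle=0\}$ (in particular $\vec{v}$ is orthogonal to the $z$-axis), $\alpha=-1$, and $\Sigma$ is a circular cylinder about the $z$-axis.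
   Context: $\langle\cdot,\cdot\rangle$ is the Euclidean inner product on $\mathbb{R}^3$, $N$ is the unit normal vector of $\Sigma$, and the mean curvature $H$ is defined as the sum of the principal curvatures (computed with respect to $N$). The value $\alpha=0$ is excluded throughout the paper. The helicoidal surface is assumed to be generated by moving a regular planar curve $\gamma(s)=(x(s),0,z(s))$ by the motions $\mathcal{H}_t$, i.e. parametrized by $\Psi(s,t)=(x(s)\cos t,x(s)\sin t,z(s)+ht)$ with $x^2+h^2x'^2>0$. *)

(* Defs.v *)
From Stdlib Require Import Reals.
From Coquelicot Require Import Coquelicot.
Open Scope R_scope.

Record vec3 := V3 { vx : R; vy : R; vz : R }.

Definition dot (u w : vec3) : R := vx u * vx w + vy u * vy w + vz u * vz w.
Definition cross (u w : vec3) : vec3 :=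
  V3 (vy u * vz w - vz u * vy w) (vz u * vx w - vx u * vz w) (vx u * vy w - vy u * vx w).
Definition vnorm (u : vec3) : R := sqrt (dot u u).
Definition scal (k : R) (u : vec3) : vec3 := V3 (k * vx u) (k * vy u) (k * vz u).

Definition helicoidal_motion (h t : R) (p : vec3) : vec3 :=
  V3 (vx p * cos t - vy p * sin t) (vx p * sin t + vy p * cos t) (vz p + h * t).

Definition helicoidal_param (h : R) (x z : R -> R) (s t : R) : vec3 :=
  helicoidal_motion h t (V3 (x s) 0 (z s)).

Definition d_s (X : R -> R -> vec3) (s t : R) : vec3 :=
  V3 (Derive (fun u => vx (X u t)) s) (Derive (fun u => vy (X u t)) s)
     (Derive (fun u => vz (X u t)) s).
Definition d_t (X : R -> R -> vec3) (s t : R) : vec3 :=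
  V3 (Derive (fun u => vx (X s u)) t) (Derive (fun u => vy (X s u)) t)
     (Derive (fun u => vz (X s u)) t).

Definition unit_normal (X : R -> R -> vec3) (s t : R) : vec3 :=
  let n := cross (d_s X s t) (d_t X s t) in scal (/ vnorm n) n.

(* Mean curvature = sum of principal curvatures w.r.t. N:
   H = (eG - 2fF + gE)/(EG - F^2). *)
Definition mean_curvature (X : R -> R -> vec3) (s t : R) : R :=
  let Xs := d_s X s t in
  let Xt := d_t X s t in
  let N := unit_normal X s t in
  let E := dot Xs Xs in
  let F := dot Xs Xt in
  let G := dot Xt Xt in
  let e := dot (d_s (d_s X) s t) N in
  let f := dot (d_t (d_s X) s t) N in
  let g := dot (d_t (d_t X) s t) N in
  (e * G - 2 * f * F + g * E) / (E * G - F * F).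

(* Main.v *)
Require Import Defs.
From Stdlib Require Import Reals.
From Coquelicot Require Import Coquelicot.
From Stdlib Require Import Lra FunctionalExtensionality Classical.
Open Scope R_scope.

Lemma Derive_plus_const f k y : Derive (fun u => f u + k) y = Derive f y.
Proof.
  unfold Derive. f_equal. apply Lim_ext. intros e.
  replace (f (y + e) + k - (f y + k)) with (f (y + e) - f y) by ring. reflexivity.
Qed.

Section S.
Variables (h : R) (x z : R -> R).
Let x1 := Derive x.
Let x2 := Derive (Derive x).
Let z1 := Derive z.
Let z2 := Derive (Derive z).

Lemma ds_Psi : d_s (helicoidal_param h x z) =
  fun s t => V3 (Derive x s * cos t) (Derive x s * sin t) (Derive z s).
Proof.
  apply functional_extensionality; intro s; apply functional_extensionality; intro t.
  unfold d_s, helicoidal_param, helicoidal_motion; simpl. f_equal.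
  - rewrite (Derive_ext _ (fun u => cos t * x u)); [rewrite Derive_scal; ring | intro; ring].
  - rewrite (Derive_ext _ (fun u => sin t * x u)); [rewrite Derive_scal; ring | intro; ring].
  - apply Derive_plus_const.
Qed.

Lemma dt_Psi : d_t (helicoidal_param h x z) =
  fun s t => V3 (- x s * sin t) (x s * cos t) h.
Proof.
  apply functional_extensionality; intro s; apply functional_extensionality; intro t.
  unfold d_t, helicoidal_param, helicoidal_motion; simpl. f_equal;
  apply is_derive_unique; auto_derive; auto; ring.
Qed.

Lemma dss : d_s (fun s t => V3 (Derive x s * cos t) (Derive x s * sin t) (Derive z s)) =
  fun s t => V3 (Derive (Derive x) s * cos t) (Derive (Derive x) s * sin t) (Derive (Derive z) s).
Proof.
  apply functional_extensionality; intro s; apply functional_extensionality; intro t.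
  unfold d_s; simpl. f_equal.
  - rewrite (Derive_ext _ (fun u => cos t * Derive x u)); [rewrite Derive_scal; ring | intro; ring].
  - rewrite (Derive_ext _ (fun u => sin t * Derive x u)); [rewrite Derive_scal; ring | intro; ring].
Qed.

Lemma dts : d_t (fun s t => V3 (Derive x s * cos t) (Derive x s * sin t) (Derive z s)) =
  fun s t => V3 (- Derive x s * sin t) (Derive x s * cos t) 0.
Proof.
  apply functional_extensionality; intro s; apply functional_extensionality; intro t.
  unfold d_t; simpl. f_equal;
  apply is_derive_unique; auto_derive; auto; ring.
Qed.

Lemma dtt : d_t (fun s t => V3 (- x s * sin t) (x s * cos t) h) =
  fun s t => V3 (- x s * cos t) (- x s * sin t) 0.
Proof.
  apply functional_extensionality; intro s; apply functional_extensionality; intro t.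
  unfold d_t; simpl. f_equal;
  apply is_derive_unique; auto_derive; auto; ring.
Qed.
End S.

Definition Kf (h : R) (x z : R -> R) (s : R) : R :=
  let X := x s in let X1 := Derive x s in let X2 := Derive (Derive x) s in
  let Z1 := Derive z s in let Z2 := Derive (Derive z) s in
  let E := X1 * X1 + Z1 * Z1 in let F := Z1 * h in let G := X * X + h * h in
  let e0 := - X2 * Z1 * X + Z2 * X * X1 in
  let f0 := - X1 * X1 * h in
  let g0 := X * X * Z1 in
  (e0 * G - 2 * f0 * F + g0 * E) / (E * G - F * F).

Definition nvec (h : R) (x z : R -> R) (s t : R) : vec3 :=
  cross (V3 (Derive x s * cos t) (Derive x s * sin t) (Derive z s))
        (V3 (- x s * sin t) (x s * cos t) h).

Lemma dot_scal u k w : dot u (Defs.scal k w) = k * dot u w.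
Proof. unfold dot, Defs.scal; simpl; ring. Qed.
Lemma dot_scal_l u k w : dot (Defs.scal k w) u = k * dot w u.
Proof. unfold dot, Defs.scal; simpl; ring. Qed.

Lemma MC_key h x z s t :
  vnorm (nvec h x z s t) <> 0 ->
  vnorm (nvec h x z s t) * mean_curvature (helicoidal_param h x z) s t = Kf h x z s.
Proof.
  intro HW.
  unfold mean_curvature, unit_normal.
  rewrite ds_Psi, dt_Psi, dss, dts, dtt.
  fold (nvec h x z s t).
  set (W := vnorm (nvec h x z s t)).
  rewrite !dot_scal.
  assert (Hs : sin t ^ 2 = 1 - cos t ^ 2) by (rewrite <- (sin2_cos2 t); unfold Rsqr; ring).
  unfold Kf, nvec, dot, cross; simpl.
  set (X := x s); set (X1 := Derive x s); set (X2 := Derive (Derive x) s);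
  set (Z1 := Derive z s); set (Z2 := Derive (Derive z) s).
  set (c := cos t) in *; set (S := sin t) in *.
  assert (E1 : X1 * c * (X1 * c) + X1 * S * (X1 * S) + Z1 * Z1 = X1 * X1 + Z1 * Z1) by ring [Hs].
  assert (E2 : X1 * c * (- X * S) + X1 * S * (X * c) + Z1 * h = Z1 * h) by ring.
  assert (E3 : - X * S * (- X * S) + X * c * (X * c) + h * h = X * X + h * h) by ring [Hs].
  rewrite E1, E2, E3.
  match goal with |- W * ((/ W * ?e * _ - 2 * (/ W * ?f) * _ + / W * ?g * _) / _) = _ =>
    replace e with (- X2 * Z1 * X + Z2 * X * X1) by ring [Hs];
    replace f with (- X1 * X1 * h) by ring [Hs];
    replace g with (X * X * Z1) by ring [Hs] end.
  unfold Rdiv; match goal with |- _ = ?N * ?Di =>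
    transitivity (W * / W * (N * Di)); [ring | rewrite Rinv_r by exact HW; ring] end.
Qed.
Lemma indep A B C D c d : c < d ->
  (forall t, c < t < d -> A * cos t + B * sin t + C * t + D = 0) ->
  A = 0 /\ B = 0 /\ C = 0 /\ D = 0.
Proof.
  intros Hcd Hf.
  set (dl := Rmin 1 ((d - c) / 8)).
  assert (Hd1 : dl <= 1) by apply Rmin_l.
  assert (Hd2 : dl <= (d - c) / 8) by apply Rmin_r.
  assert (Hd0 : 0 < dl) by (unfold dl; apply Rmin_glb_lt; lra).
  set (t0 := (c + d) / 2).
  assert (Hpi := PI2_1).
  assert (Hsin : 0 < sin dl) by (apply sin_gt_0; lra).
  assert (Hsin2 : 0 < sin (dl / 2)) by (apply sin_gt_0; lra).
  assert (Hcos : cos dl < 1).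
  { replace dl with (2 * (dl / 2)) by field. rewrite cos_2a_sin. nra. }
  assert (G : forall t, c < t - dl -> t + dl < d -> A * cos t + B * sin t = 0).
  { intros t H1 H2.
    assert (F1 := Hf (t + dl) ltac:(lra)).
    assert (F2 := Hf t ltac:(lra)).
    assert (F3 := Hf (t - dl) ltac:(lra)).
    rewrite cos_plus, sin_plus in F1. rewrite cos_minus, sin_minus in F3.
    assert (Heq : (A * cos t + B * sin t) * (2 * cos dl - 2) = 0) by nra.
    apply Rmult_integral in Heq. destruct Heq; lra. }
  assert (G0 := G t0 ltac:(unfold t0; lra) ltac:(unfold t0; lra)).
  assert (G1 := G (t0 + dl) ltac:(unfold t0; lra) ltac:(unfold t0; lra)).
  assert (F0 := Hf t0 ltac:(unfold t0; lra)).
  assert (F1 := Hf (t0 + dl) ltac:(unfold t0; lra)).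
  assert (HC : C = 0) by nra.
  assert (HD : D = 0) by nra.
  rewrite cos_plus, sin_plus in G1.
  assert (Hcs := sin2_cos2 t0). unfold Rsqr in Hcs.
  assert (H3 : sin dl * (A * sin t0 - B * cos t0) = 0) by nra.
  apply Rmult_integral in H3. destruct H3 as [H3|H3]; [lra|].
  assert (HA : A = 0) by nra.
  assert (HB : B = 0) by nra.
  auto.
Qed.

Lemma Kf_special h x z s : Derive x s = 0 -> Derive (Derive x) s = 0 -> x s <> 0 ->
  Derive z s <> 0 -> Kf h x z s = Derive z s.
Proof.
  intros H1 H2 H3 H4. unfold Kf. rewrite H1, H2. field. replace (Derive z s * Derive z s * (x s * x s + h * h) - Derive z s * h * (Derive z s * h)) with ((Derive z s * x s) * (Derive z s * x s)) by ring. apply Rmult_integral_contrapositive; split; apply Rmult_integral_contrapositive; split; auto.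
Qed.

Lemma loc_ab a b s : a < s < b -> locally s (fun u => a < u < b).
Proof.
  intros Hs. apply (locally_interval _ s (Finite a) (Finite b)); simpl; try lra.
  intros y H1 H2; simpl in *; lra.
Qed.

Lemma loc_nz (f : R -> R) s : ex_derive f s -> f s <> 0 -> locally s (fun u => f u <> 0).
Proof.
  intros Hd Hn. apply ex_derive_continuous in Hd.
  unfold continuous, filterlim, filter_le, filtermap in Hd. apply (Hd (fun y => y <> 0)).
  destruct (Rlt_or_le (f s) 0) as [Hl|Hl].
  - apply (locally_interval _ _ m_infty (Finite 0)); simpl; auto. intros y _ Hy; simpl in *; lra.
  - apply (locally_interval _ _ (Finite 0) p_infty); simpl; auto; try lra.
    intros y Hy _; simpl in *; lra.
Qed.

Theorem theorem1 (h alpha : R) (v : vec3) (x z : R -> R) (a b c d : R) :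
  h <> 0 ->
  alpha <> 0 ->
  dot v v = 1 ->
  a < b -> c < d ->
  (forall (n : nat) (s : R), a < s < b -> ex_derive_n x n s /\ ex_derive_n z n s) ->
  (forall s, a < s < b -> Derive x s <> 0 \/ Derive z s <> 0) ->
  (forall s, a < s < b -> x s ^ 2 + h ^ 2 * Derive x s ^ 2 > 0) ->
  (forall s t, a < s < b -> c < t < d ->
     vnorm (cross (d_s (helicoidal_param h x z) s t) (d_t (helicoidal_param h x z) s t)) <> 0) ->
  (forall s t, a < s < b -> c < t < d -> dot (helicoidal_param h x z s t) v > 0) ->
  (forall s t, a < s < b -> c < t < d ->
     mean_curvature (helicoidal_param h x z) s t =
     alpha * dot (unit_normal (helicoidal_param h x z) s t) v
       / dot (helicoidal_param h x z s t) v) ->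
  vz v = 0 /\ alpha = -1 /\
  exists r : R, r > 0 /\
    forall s t, a < s < b -> c < t < d ->
      vx (helicoidal_param h x z s t) ^ 2 + vy (helicoidal_param h x z s t) ^ 2 = r ^ 2.
Proof.
  intros Hh Ha Hv Hab Hcd Hsm Hreg Hx2 Himm Hpos Heq.
  set (K := Kf h x z).
  assert (Coef : forall s, a < s < b ->
    let X := x s in let X1 := Derive x s in let Z := z s in let Z1 := Derive z s in
    K s * X * vx v + alpha * (Z1 * X * vx v + X1 * h * vy v) = 0 /\
    K s * X * vy v - alpha * (X1 * h * vx v - Z1 * X * vy v) = 0 /\
    K s * h * vz v = 0 /\
    K s * Z * vz v - alpha * X * X1 * vz v = 0).
  { intros s Hs X X1 Z Z1.
    apply (indep _ _ _ _ c d Hcd).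
    intros t Ht.
    assert (HI := Himm s t Hs Ht). assert (HP := Hpos s t Hs Ht). assert (HE := Heq s t Hs Ht).
    rewrite ds_Psi, dt_Psi in HI. fold (nvec h x z s t) in HI.
    unfold unit_normal in HE. rewrite ds_Psi, dt_Psi in HE. fold (nvec h x z s t) in HE.
    assert (HK := MC_key h x z s t HI).
    rewrite HE, dot_scal_l in HK. fold K in HK.
    set (W := vnorm (nvec h x z s t)) in *.
    set (P := dot (helicoidal_param h x z s t) v) in *.
    assert (HK2 : K s * P = alpha * dot (nvec h x z s t) v).
    { rewrite <- HK. field. split; lra. }
    assert (Hs2 : sin t ^ 2 = 1 - cos t ^ 2) by (rewrite <- (sin2_cos2 t); unfold Rsqr; ring).
    transitivity (K s * P - alpha * dot (nvec h x z s t) v); [|lra].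
    unfold P, nvec, helicoidal_param, helicoidal_motion, dot, cross; simpl.
    fold X X1 Z Z1. ring [Hs2]. }
  set (mid := (a + b) / 2).
  assert (Hmid : a < mid < b) by (unfold mid; lra).
  assert (Hexd : forall s, a < s < b -> ex_derive x s).
  { intros s Hs. exact (proj1 (Hsm 1%nat s Hs)). }
  assert (Hv3 : vz v = 0).
  { destruct (Req_dec (vz v) 0) as [E|Hne]; [exact E|exfalso].
    assert (HK0 : forall s, a < s < b -> K s = 0 /\ x s * Derive x s = 0).
    { intros s Hs. destruct (Coef s Hs) as (_ & _ & C3 & C4). simpl in *.
      assert (K s = 0).
      { destruct (Rmult_integral _ _ C3) as [C|C]; [|contradiction].
        destruct (Rmult_integral _ _ C) as [C'|C']; [exact C'|contradiction]. }
      split; auto. rewrite H in C4.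
      assert (HH : (alpha * vz v) * (x s * Derive x s) = 0) by lra.
      destruct (Rmult_integral _ _ HH) as [C|C]; auto.
      destruct (Rmult_integral _ _ C); contradiction. }
    destruct (classic (exists s0, a < s0 < b /\ x s0 <> 0)) as [[s0 [Hs0 Hx0]]|Hno].
    - assert (Hl : locally s0 (fun u => Derive x u = 0)).
      { apply (filter_imp (fun u => (a < u < b) /\ x u <> 0)).
        + intros u [Hu Hxu]. destruct (HK0 u Hu) as [_ P].
          destruct (Rmult_integral _ _ P); [contradiction|assumption].
        + apply filter_and; [apply loc_ab; auto | apply loc_nz; auto]. }
      assert (D1 : Derive x s0 = 0) by (apply (locally_singleton _ _ Hl)).
      assert (D2 : Derive (Derive x) s0 = 0).
      { rewrite (Derive_ext_loc _ (fun _ => 0)); [apply Derive_const|exact Hl]. }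
      destruct (Hreg s0 Hs0) as [R1|R1]; [contradiction|].
      assert (HK := Kf_special h x z s0 D1 D2 Hx0 R1).
      destruct (HK0 s0 Hs0) as [HK' _]. unfold K in HK'. congruence.
    - assert (Hz : forall s, a < s < b -> x s = 0).
      { intros s Hs. apply NNPP. intro. apply Hno. eauto. }
      assert (D1 : Derive x mid = 0).
      { rewrite (Derive_ext_loc _ (fun _ => 0)); [apply Derive_const|].
        apply (filter_imp (fun u => a < u < b)); [|apply loc_ab; auto].
        intros; auto. }
      assert (HH := Hx2 mid Hmid). rewrite D1, (Hz mid Hmid) in HH. lra. }
  assert (Hv12 : vx v * vx v + vy v * vy v = 1).
  { unfold dot in Hv. rewrite Hv3 in Hv. lra. }
  assert (HX1 : forall s, a < s < b -> Derive x s = 0).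
  { intros s Hs. destruct (Coef s Hs) as (C1 & C2 & _ & _). simpl in *.
    assert (HH : (alpha * h) * Derive x s = 0).
    { transitivity ((K s * x s * vx v + alpha * (Derive z s * x s * vx v + Derive x s * h * vy v)) * vy v
        - (K s * x s * vy v - alpha * (Derive x s * h * vx v - Derive z s * x s * vy v)) * vx v).
      - transitivity (alpha * h * Derive x s * (vx v * vx v + vy v * vy v)); [rewrite Hv12; ring| ring].
      - rewrite C1, C2. ring. }
    destruct (Rmult_integral _ _ HH) as [C|C]; auto.
    destruct (Rmult_integral _ _ C); contradiction. }
  assert (HX2 : forall s, a < s < b -> Derive (Derive x) s = 0).
  { intros s Hs. rewrite (Derive_ext_loc _ (fun _ => 0)); [apply Derive_const|].
    apply (filter_imp (fun u => a < u < b)); [|apply loc_ab; auto]. auto. }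
  assert (HXn : forall s, a < s < b -> x s <> 0).
  { intros s Hs Hc. assert (HH := Hx2 s Hs). rewrite HX1, Hc in HH by auto. lra. }
  assert (HZn : forall s, a < s < b -> Derive z s <> 0).
  { intros s Hs. destruct (Hreg s Hs) as [H|H]; [exfalso; apply H; auto | exact H]. }
  split; [exact Hv3|split].
  - destruct (Coef mid Hmid) as (C1 & C2 & _ & _). simpl in *.
    assert (HK := Kf_special h x z mid (HX1 mid Hmid) (HX2 mid Hmid) (HXn mid Hmid) (HZn mid Hmid)).
    fold K in HK. rewrite HK, (HX1 mid Hmid) in C1, C2.
    assert (HH : (x mid * Derive z mid) * (1 + alpha) = 0).
    { transitivity (x mid * Derive z mid * (1 + alpha) * (vx v * vx v + vy v * vy v)); [rewrite Hv12; ring|].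
      transitivity ((Derive z mid * x mid * vx v + alpha * (Derive z mid * x mid * vx v + 0 * h * vy v)) * vx v
        + (Derive z mid * x mid * vy v - alpha * (0 * h * vx v - Derive z mid * x mid * vy v)) * vy v); [ring|].
      rewrite C1, C2. ring. }
    destruct (Rmult_integral _ _ HH) as [C|C]; [|lra].
    destruct (Rmult_integral _ _ C) as [C'|C']; exfalso; [apply (HXn mid Hmid)|apply (HZn mid Hmid)]; auto.
  - assert (Hconst : forall s, a < s < b -> x s = x mid).
    { assert (Hder : forall t, a < t < b -> is_derive x t zero).
      { intros t Ht. change (@zero R_NormedModule) with 0. rewrite <- (HX1 t Ht).
        apply Derive_correct. auto. }
      intros s Hs. destruct (Rtotal_order s mid) as [Hl|[He|Hg]].
      - apply (eq_is_derive x s mid); auto. intros t Ht. apply Hder. lra.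
      - rewrite He; auto.
      - symmetry. apply (eq_is_derive x mid s); auto. intros t Ht. apply Hder. lra. }
    exists (Rabs (x mid)). split.
    + apply Rabs_pos_lt. apply HXn; auto.
    + intros s t Hs Ht. rewrite pow2_abs. unfold helicoidal_param, helicoidal_motion; simpl.
      rewrite (Hconst s Hs). assert (Hcs := sin2_cos2 t). unfold Rsqr in Hcs.
      transitivity (x mid ^ 2 * (sin t * sin t + cos t * cos t)); [ring|rewrite Hcs; ring].
Qed.
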